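(* Let $T$ be a rooted binary phylogenetic tree with root of out-degree 2 and at least 3 leaves, under the $N_2$ model, let $y,z$ be a cherry with parent $w$, and let $T''$ and $T'_{0.5}$ be as defined in the context. Then $RA_\varphi(T'')\ge RA_\varphi(T'_{0.5})$.
   Context: A rooted binary phylogenetic tree is a finite tree with a distinguished root vertex $\rho$, all edges directed away from $\rho$, in which $\rho$ has out-degree 2 or 1, and every other vertex has in-degree 1 and out-degree 0 or 2; out-degree-0 vertices are leaves. Under the Neyman 2-state model $N_2$, each edge $e$ carries a substitution probability $p_e\in[0,\frac12]$; given the root state, states propagate independently along edges, each edge changing state with probability $p_e$. The coin-toss method $\varphi$: leaves get their observed states; proceeding towards the root, a vertex whose two children have equal states gets that state, otherwise one of the two chosen by an independent fair coin toss; a vertex with a single child gets its child's state; $RA_\varphi$ is the probability that the state assigned to the root equals the true root state. Vertices of in- and out-degree 1 may be suppressed (merging consecutive edges with substitution probabilities $a,b$ into one with probability $a+b-2ab$). $T'_{0.5}$ is obtained from $T$ by deleting $y,z$ and their incident edges, attaching a new leaf $w^\star$ to $w$ via an edge with substitution probability $\frac12$, and suppressing $w$. $T''$ is obtained from $T$ by deleting $y$, $z$, $w$ and all edges incident to them (including the edge into $w$), and suppressing the resulting vertex of in- and out-degree 1. *)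

(* Defs.v *)
From Stdlib Require Import Reals Lra.
Open Scope R_scope.

(* Rooted trees with substitution probabilities on edges.
   Node1 p t : vertex with one child t, edge probability p.
   Node2 p1 t1 p2 t2 : vertex with two children. *)
Inductive tree : Type :=
| Leaf : tree
| Node1 : R -> tree -> tree
| Node2 : R -> tree -> R -> tree -> tree.

Fixpoint all_binary (t : tree) : Prop :=
  match t with
  | Leaf => True
  | Node1 _ _ => False
  | Node2 _ t1 _ t2 => all_binary t1 /\ all_binary t2
  end.

Fixpoint nleaves (t : tree) : nat :=
  match t with
  | Leaf => 1%nat
  | Node1 _ t1 => nleaves t1
  | Node2 _ t1 _ t2 => (nleaves t1 + nleaves t2)%nat
  end.

Fixpoint probs_ok (t : tree) : Prop :=
  match t with
  | Leaf => True
  | Node1 p t1 => 0 <= p <= /2 /\ probs_ok t1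
  | Node2 p1 t1 p2 t2 =>
      0 <= p1 <= /2 /\ probs_ok t1 /\ 0 <= p2 <= /2 /\ probs_ok t2
  end.

(* One-hole contexts whose hole is a vertex; the outermost constructor
   is at the root. *)
Inductive ctx : Type :=
| Hole : ctx
| CL : R -> ctx -> R -> tree -> ctx
| CR : R -> tree -> R -> ctx -> ctx.

Fixpoint fill (C : ctx) (u : tree) : tree :=
  match C with
  | Hole => u
  | CL p1 C1 p2 t2 => Node2 p1 (fill C1 u) p2 t2
  | CR p1 t1 p2 C2 => Node2 p1 t1 p2 (fill C2 u)
  end.

(* merging two consecutive edges *)
Definition merge (a b : R) : R := a + b - 2 * a * b.

(* suppress every non-root vertex of in- and out-degree 1:
   supp_edge p t gives the (merged) edge probability and subtree hanging
   below an edge with probability p into t. *)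
Fixpoint supp_edge (p : R) (t : tree) : R * tree :=
  match t with
  | Leaf => (p, Leaf)
  | Node1 q t1 => let (q', t') := supp_edge q t1 in (merge p q', t')
  | Node2 p1 t1 p2 t2 =>
      let (a1, u1) := supp_edge p1 t1 in
      let (a2, u2) := supp_edge p2 t2 in
      (p, Node2 a1 u1 a2 u2)
  end.

Definition suppress (t : tree) : tree :=
  match t with
  | Leaf => Leaf
  | Node1 q t1 => let (q', t') := supp_edge q t1 in Node1 q' t'
  | Node2 p1 t1 p2 t2 =>
      let (a1, u1) := supp_edge p1 t1 in
      let (a2, u2) := supp_edge p2 t2 in
      Node2 a1 u1 a2 u2
  end.

(* N2 model: states are booleans *)
Definition trans (p : R) (s s' : bool) : R := if Bool.eqb s s' then 1 - p else p.

Definition ind (b : bool) : R := if b then 1 else 0.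

(* coin-toss rule: probability that the parent is assigned x when the
   children are assigned x1, x2 *)
Definition coin (x1 x2 x : bool) : R :=
  if Bool.eqb x1 x2 then ind (Bool.eqb x x1) else /2.

(* P t s x : probability that the coin-toss method assigns state x to the
   root of t, given that the true state at the root of t is s. *)
Fixpoint Pphi (t : tree) (s x : bool) : R :=
  match t with
  | Leaf => ind (Bool.eqb x s)
  | Node1 p t1 =>
      trans p s false * Pphi t1 false x + trans p s true * Pphi t1 true x
  | Node2 p1 t1 p2 t2 =>
      let Q1 x1 := trans p1 s false * Pphi t1 false x1
                   + trans p1 s true * Pphi t1 true x1 in
      let Q2 x2 := trans p2 s false * Pphi t2 false x2
                   + trans p2 s true * Pphi t2 true x2 in
      Q1 false * Q2 false * coin false false x
      + Q1 false * Q2 true * coin false true x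
      + Q1 true * Q2 false * coin true false x
      + Q1 true * Q2 true * coin true true x
  end.

(* reconstruction accuracy, root state uniform (stationary law of N2) *)
Definition RA (t : tree) : R := /2 * Pphi t false false + /2 * Pphi t true true.

Definition cherry (py pz : R) : tree := Node2 py Leaf pz Leaf.

(* Main.v *)
Require Import Defs.
From Stdlib Require Import Reals Lra.
Open Scope R_scope.

Definition E (p : R) (t : tree) (s x : bool) : R :=
  trans p s false * Pphi t false x + trans p s true * Pphi t true x.

Lemma node2_ext a1 u1 a2 u2 p1 t1 p2 t2 :
  (forall s x, E a1 u1 s x = E p1 t1 s x) ->
  (forall s x, E a2 u2 s x = E p2 t2 s x) ->
  forall s x, Pphi (Node2 a1 u1 a2 u2) s x = Pphi (Node2 p1 t1 p2 t2) s x.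
Proof.
  intros H1 H2 s x; simpl; unfold E in *; rewrite !H1, !H2; reflexivity.
Qed.

Lemma supp_E : forall t p s x,
  E (fst (supp_edge p t)) (snd (supp_edge p t)) s x = E p t s x.
Proof.
  induction t as [|q t1 IH|p1 t1 IH1 p2 t2 IH2]; intros p s x.
  - reflexivity.
  - simpl. specialize (IH q). destruct (supp_edge q t1) as [q' t'] eqn:Hq.
    simpl in *.
    assert (Hm : forall m, Pphi (Node1 q t1) m x = E q' t' m x)
      by (intro m; rewrite IH; reflexivity).
    unfold E at 2. rewrite !Hm. unfold E, trans, merge.
    destruct s; simpl; ring.
  - simpl. specialize (IH1 p1). specialize (IH2 p2).
    destruct (supp_edge p1 t1) as [a1 u1]; destruct (supp_edge p2 t2) as [a2 u2].
    simpl in *. unfold E.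
    rewrite !(node2_ext a1 u1 a2 u2 p1 t1 p2 t2 IH1 IH2). reflexivity.
Qed.

Lemma Pphi_suppress : forall t s x, Pphi (suppress t) s x = Pphi t s x.
Proof.
  destruct t as [|q t1|p1 t1 p2 t2]; intros s x.
  - reflexivity.
  - simpl. pose proof (supp_E t1 q) as H. destruct (supp_edge q t1) as [q' t'].
    simpl in H. apply (H s x).
  - simpl. pose proof (supp_E t1 p1) as H1. pose proof (supp_E t2 p2) as H2.
    destruct (supp_edge p1 t1) as [a1 u1]; destruct (supp_edge p2 t2) as [a2 u2].
    simpl in *. apply (node2_ext a1 u1 a2 u2 p1 t1 p2 t2 H1 H2).
Qed.

Lemma Pphi_sum : forall t s, Pphi t s false + Pphi t s true = 1.
Proof.
  induction t as [|q t1 IH|p1 t1 IH1 p2 t2 IH2]; intros s.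
  - destruct s; simpl; lra.
  - simpl. pose proof (IH false). pose proof (IH true).
    unfold trans; destruct s; simpl; nra.
  - simpl. pose proof (IH1 false). pose proof (IH1 true).
    pose proof (IH2 false). pose proof (IH2 true).
    unfold coin, ind, trans; destruct s; simpl.
    all: set (a := Pphi t1 false false) in *; set (b := Pphi t1 false true) in *;
         set (c := Pphi t1 true false) in *; set (d := Pphi t1 true true) in *;
         set (e := Pphi t2 false false) in *; set (f := Pphi t2 false true) in *;
         set (g := Pphi t2 true false) in *; set (h := Pphi t2 true true) in *.
    all: replace b with (1 - a) by lra; replace d with (1 - c) by lra;
         replace f with (1 - e) by lra; replace h with (1 - g) by lra; field.
Qed.

Lemma Pphi_sym : forall t s x, Pphi t (negb s) (negb x) = Pphi t s x.
Proof.
  induction t as [|q t1 IH|p1 t1 IH1 p2 t2 IH2]; intros s x.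
  - destruct s, x; reflexivity.
  - simpl. pose proof (IH true true). pose proof (IH false false).
    pose proof (IH true false). pose proof (IH false true). simpl in *.
    unfold trans; destruct s, x; simpl in *;
    repeat match goal with H : Pphi _ _ _ = Pphi _ _ _ |- _ => rewrite H; clear H end;
    ring.
  - simpl. pose proof (IH1 true x). pose proof (IH1 false x).
    pose proof (IH2 true x). pose proof (IH2 false x).
    pose proof (IH1 true true). pose proof (IH1 false false).
    pose proof (IH2 true true). pose proof (IH2 false false).
    pose proof (IH1 true false). pose proof (IH1 false true).
    pose proof (IH2 true false). pose proof (IH2 false true).
    simpl in *.
    unfold coin, ind, trans; destruct s, x; simpl in *;
    repeat match goal with H : Pphi _ _ _ = Pphi _ _ _ |- _ => rewrite H; clear H end;
    ring.
Qed.

Definition acc (t : tree) : R := Pphi t false false.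
Definition beta (p a : R) : R := a * (1 - 2 * p) + p.

Lemma acc_facts t : Pphi t true true = acc t /\ Pphi t false true = 1 - acc t
  /\ Pphi t true false = 1 - acc t.
Proof.
  unfold acc. pose proof (Pphi_sym t false false) as H1. simpl in H1.
  pose proof (Pphi_sum t false). pose proof (Pphi_sum t true). lra.
Qed.

Lemma acc_Node1 p t : acc (Node1 p t) = beta p (acc t).
Proof.
  unfold acc at 1; simpl. destruct (acc_facts t) as [H1 [H2 H3]].
  rewrite H3. unfold trans, beta, acc; simpl. ring.
Qed.

Lemma acc_Node2 p1 t1 p2 t2 :
  acc (Node2 p1 t1 p2 t2) = (beta p1 (acc t1) + beta p2 (acc t2)) / 2.
Proof.
  unfold acc at 1; simpl. destruct (acc_facts t1) as [H1 [H2 H3]].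
  destruct (acc_facts t2) as [G1 [G2 G3]].
  rewrite H1, H2, H3, G1, G2, G3. unfold coin, ind, trans, beta, acc; simpl. field.
Qed.

Lemma RA_acc t : RA t = acc t.
Proof. unfold RA. destruct (acc_facts t) as [H _]. rewrite H. unfold acc; lra. Qed.

Lemma acc_half : forall t, probs_ok t -> acc t >= /2.
Proof.
  induction t as [|q t1 IH|p1 t1 IH1 p2 t2 IH2]; simpl; intros H.
  - unfold acc; simpl; lra.
  - rewrite acc_Node1. destruct H as [Hq H]. specialize (IH H). unfold beta.
    assert (0 <= (acc t1 - /2) * (1 - 2 * q)) by (apply Rmult_le_pos; lra). nra.
  - rewrite acc_Node2. destruct H as [Hp1 [Ht1 [Hp2 Ht2]]].
    specialize (IH1 Ht1); specialize (IH2 Ht2). unfold beta.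
    assert (0 <= (acc t1 - /2) * (1 - 2 * p1)) by (apply Rmult_le_pos; lra).
    assert (0 <= (acc t2 - /2) * (1 - 2 * p2)) by (apply Rmult_le_pos; lra). nra.
Qed.

Fixpoint probs_ok_ctx (C : ctx) : Prop :=
  match C with
  | Hole => True
  | CL p1 C1 p2 t2 => 0 <= p1 <= /2 /\ probs_ok_ctx C1 /\ 0 <= p2 <= /2 /\ probs_ok t2
  | CR p1 t1 p2 C2 => 0 <= p1 <= /2 /\ probs_ok t1 /\ 0 <= p2 <= /2 /\ probs_ok_ctx C2
  end.

Lemma probs_fill : forall C u, probs_ok (fill C u) -> probs_ok_ctx C /\ probs_ok u.
Proof.
  induction C as [|p1 C1 IH p2 t2|p1 t1 p2 C2 IH]; simpl; intros u H.
  - tauto.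
  - destruct H as [A [B [D F]]]. destruct (IH u B). tauto.
  - destruct H as [A [B [D F]]]. destruct (IH u F). tauto.
Qed.

Lemma fill_mono : forall C u1 u2, probs_ok_ctx C -> acc u1 >= acc u2 ->
  acc (fill C u1) >= acc (fill C u2).
Proof.
  induction C as [|p1 C1 IH p2 t2|p1 t1 p2 C2 IH]; simpl; intros u1 u2 HC H.
  - exact H.
  - rewrite !acc_Node2. destruct HC as [A [B _]]. specialize (IH u1 u2 B H).
    unfold beta.
    assert (0 <= (acc (fill C1 u1) - acc (fill C1 u2)) * (1 - 2 * p1)) by (apply Rmult_le_pos; lra). nra.
  - rewrite !acc_Node2. destruct HC as [_ [_ [A B]]]. specialize (IH u1 u2 B H).
    unfold beta.
    assert (0 <= (acc (fill C2 u1) - acc (fill C2 u2)) * (1 - 2 * p2)) by (apply Rmult_le_pos; lra). nra.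
Qed.

Lemma acc_suppress t : acc (suppress t) = acc t.
Proof. unfold acc. apply Pphi_suppress. Qed.

Theorem mainTheorem8 (T : tree) (C : ctx) (pw py pz ps : R) (S : tree) (wleft : bool) :
  all_binary T -> (3 <= nleaves T)%nat -> probs_ok T ->
  T = fill C (if wleft then Node2 pw (cherry py pz) ps S
              else Node2 ps S pw (cherry py pz)) ->
  let T'' := suppress (fill C (Node1 ps S)) in
  let T'05 := suppress (fill C (if wleft then Node2 pw (Node1 (/2) Leaf) ps S
                                else Node2 ps S pw (Node1 (/2) Leaf))) in
  RA T'' >= RA T'05.
Proof.
  intros _ _ Hok HT T'' T'05. subst T'' T'05 T.
  rewrite !RA_acc, !acc_suppress.
  destruct (probs_fill _ _ Hok) as [HC Hu].
  apply fill_mono; [exact HC|].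
  rewrite acc_Node1.
  assert (HL : acc (Node1 (/2) Leaf) = /2)
    by (rewrite acc_Node1; unfold beta, acc; simpl; field).
  destruct wleft; simpl in Hu; rewrite acc_Node2, HL;
    [destruct Hu as [Hw [_ [Hs HS]]] | destruct Hu as [Hs [HS [Hw _]]]];
    pose proof (acc_half S HS); unfold beta in *;
    assert (0 <= (acc S - /2) * (1 - 2 * ps)) by (apply Rmult_le_pos; lra); nra.
Qed.
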